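(* Let $G$ be a graph on $d+2$ vertices that is representable in $\mathbb{R}^d$ with ratio $k$. Then $G$ has a spherical representation in $\mathbb{R}^d$ with ratio $k$ if and only if both of the following hold: (3) $\det(xJ + B_G(k))$ is the zero polynomial in $x$; (4) there exists $r_0 \in \mathbb{R}$ such that $rJ + B_G(k)$ is positive semidefinite for all $r \geq r_0$.
   Context: Graphs are finite and simple with vertices labeled $1,\dots,d+2$. A finite set $S\subset\mathbb{R}^d$ is a 2-distance set if $\{\|p-q\| : p,q\in S, p\neq q\}$ has exactly two elements $\alpha_1>\alpha_2$; its distance ratio is $k=\alpha_1/\alpha_2$; its associated graph has vertex set $S$ with $p,q$ adjacent iff $\|p-q\|=\alpha_1$. $G$ is representable in $\mathbb{R}^d$ with ratio $k$ if some 2-distance set in $\mathbb{R}^d$ with ratio $k$ has associated graph $G$; it has a spherical representation with ratio $k$ if such a set can be chosen on a $(d-1)$-dimensional sphere in $\mathbb{R}^d$. $B_G(k)$ is the $(d+2)\times(d+2)$ matrix with $b_{ii}=0$, $b_{ij}=-1$ for non-adjacent $i\neq j$, $b_{ij}=-k^2$ for adjacent $i,j$. $J$ is the all-ones matrix. *)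

(* Defs.v *)
From HB Require Import structures.
From mathcomp Require Import all_boot all_order all_algebra.
From mathcomp Require Import reals.
Set Implicit Arguments. Unset Strict Implicit. Unset Printing Implicit Defensive.
Import Order.TTheory GRing.Theory Num.Theory.
Local Open Scope ring_scope.

(* Vertices 1..d+2 are 'I_(d.+2); points of R^d are row vectors 'rV[R]_d. *)

Definition edist (R : realType) (d : nat) (p q : 'rV[R]_d) : R :=
  Num.sqrt (\sum_(t < d) (p ord0 t - q ord0 t) ^+ 2).

Definition simple_graph (n : nat) (G : rel 'I_n) : Prop :=
  (forall i j, G i j = G j i) /\ (forall i, ~~ G i i).

(* The labelled family of points p (with p injective, so that its image
   S has exactly n points) is a 2-distance set with distances a1 > a2,
   its distance ratio is k = a1/a2 and its associated graph is G
   (vertex i <-> point p i). *)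
Definition two_distance_rep (R : realType) (d n : nat) (G : rel 'I_n) (k : R)
    (p : 'I_n -> 'rV[R]_d) : Prop :=
  injective p /\
  exists a1 a2 : R,
    [/\ a2 < a1,
        (forall x : R, (exists i j, i != j /\ x = edist (p i) (p j)) <->
                       (x = a1 \/ x = a2)),
        k = a1 / a2 &
        (forall i j, i != j -> (G i j <-> edist (p i) (p j) = a1))].

Definition representable (R : realType) (d : nat) (G : rel 'I_(d.+2)) (k : R) : Prop :=
  exists p : 'I_(d.+2) -> 'rV[R]_d, two_distance_rep G k p.

Definition spherical_representable (R : realType) (d : nat) (G : rel 'I_(d.+2)) (k : R) : Prop :=
  exists p : 'I_(d.+2) -> 'rV[R]_d,
    two_distance_rep G k p /\
    exists (c : 'rV[R]_d) (rho : R), 0 < rho /\ forall i, edist (p i) c = rho.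

Definition BG (R : realType) (n : nat) (G : rel 'I_n) (k : R) : 'M[R]_n :=
  \matrix_(i, j) (if i == j then 0 else if G i j then - k ^+ 2 else -1).

Definition Jmx (R : realType) (n : nat) : 'M[R]_n := const_mx 1.

Definition psd (R : realType) (n : nat) (A : 'M[R]_n) : Prop :=
  A^T = A /\ forall v : 'cV[R]_n, 0 <= (v^T *m A *m v) ord0 ord0.

(* Main.v *)
Require Import Defs.
From HB Require Import structures.
From mathcomp Require Import all_boot all_order all_algebra.
From mathcomp Require Import reals.
From mathcomp Require Import ring lra.
Set Implicit Arguments. Unset Strict Implicit. Unset Printing Implicit Defensive.
Import Order.TTheory GRing.Theory Num.Theory.
Local Open Scope ring_scope.


Lemma sqcol (R : realType) m (x : 'cV[R]_m) : (x^T *m x) ord0 ord0 = \sum_i x i ord0 ^+ 2.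
Proof. rewrite !mxE; apply: eq_bigr => i _; rewrite !mxE expr2 //. Qed.

Lemma sqcol_ge0 (R : realType) m (x : 'cV[R]_m) : 0 <= (x^T *m x) ord0 ord0.
Proof. rewrite sqcol; apply: sumr_ge0 => i _; exact: sqr_ge0. Qed.

Lemma sqcol_eq0 (R : realType) m (x : 'cV[R]_m) : (x^T *m x) ord0 ord0 = 0 -> x = 0.
Proof.
rewrite sqcol => /eqP; rewrite psumr_eq0 => [/allP H|i _]; last exact: sqr_ge0.
apply/matrixP => i j; rewrite (ord1 j) mxE.
have := H i (mem_index_enum _); rewrite sqrf_eq0 => /eqP //.
Qed.

Lemma trD (R : realType) m n (x y : 'M[R]_(m,n)) : (x + y)^T = x^T + y^T.
Proof. by apply/matrixP => i j; rewrite !mxE. Qed.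
Lemma trZ (R : realType) m n (c : R) (x : 'M[R]_(m,n)) : (c *: x)^T = c *: x^T.
Proof. by apply/matrixP => i j; rewrite !mxE. Qed.
Lemma trN (R : realType) m n (x : 'M[R]_(m,n)) : (- x)^T = - x^T.
Proof. by apply/matrixP => i j; rewrite !mxE. Qed.

Lemma psd_ker (R : realType) n (A : 'M[R]_n) (v : 'cV[R]_n) :
  psd A -> (v^T *m A *m v) ord0 ord0 = 0 -> A *m v = 0.
Proof.
move=> [sA pA] h0.
have key : forall u : 'cV[R]_n, (u^T *m A *m v) ord0 ord0 = 0.
  move=> u.
  set a := (u^T *m A *m v) ord0 ord0.
  set b := (u^T *m A *m u) ord0 ord0.
  have hb : 0 <= b by apply: pA.
  have hf : forall t : R, 0 <= 2 * t * a + t ^+ 2 * b.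
    move=> t; have := pA (v + t *: u).
    have e1 : (v^T *m A *m u) ord0 ord0 = a.
      transitivity ((v^T *m A *m u)^T ord0 ord0). rewrite [RHS]mxE. done.
      by rewrite !trmx_mul trmxK sA mulmxA.
    rewrite trD trZ !mulmxDl !mulmxDr -!scalemxAl -!scalemxAr.
    move: h0 e1; rewrite /a /b.
    move: (v^T *m A *m v) (v^T *m A *m u) (u^T *m A *m v) (u^T *m A *m u) => m1 m2 m3 m4 h0 e1.
    rewrite !mxE h0 e1 => H; nra.
  have := hf (- a / (b + 1)).
  have : (- a / (b + 1)) * (b + 1) = - a by rewrite divfK // gt_eqF // ltr_pwDr.
  move: (- a / (b + 1)) => t ht H.
  have ea : a = - (t * (b + 1)) by rewrite ht opprK.
  rewrite ea in H *; have : t ^+ 2 * (b + 2) <= 0 by nra.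
  move=> H2; have : t = 0 by nra.
  by move=> ->; rewrite mul0r oppr0.
apply: sqcol_eq0; have := key (A *m v); rewrite trmx_mul sA -!mulmxA mulmxA //.
Qed.

Definition Pm (R : realType) n d (p : 'I_n -> 'rV[R]_d) : 'M[R]_(n,d) :=
  \matrix_(i,t) p i ord0 t.
Definition qv (R : realType) n d (p : 'I_n -> 'rV[R]_d) : 'cV[R]_n :=
  \col_i \sum_t (p i ord0 t)^+2.
Definition Dm (R : realType) n d (p : 'I_n -> 'rV[R]_d) : 'M[R]_n :=
  \matrix_(i,j) \sum_t (p i ord0 t - p j ord0 t)^+2.
Definition onev (R : realType) n : 'cV[R]_n := const_mx 1.

Lemma Dm_eq (R : realType) n d (p : 'I_n -> 'rV[R]_d) :
  Dm p = qv p *m (onev R n)^T + onev R n *m (qv p)^T - 2%:R *: (Pm p *m (Pm p)^T).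
Proof.
apply/matrixP => i j; rewrite !mxE !big_ord1 !mxE mulr1 mul1r mulr_sumr -big_split -sumrB /=.
apply: eq_bigr => t _; rewrite !mxE; ring.
Qed.

Lemma Dm_shift (R : realType) n d (p : 'I_n -> 'rV[R]_d) c :
  Dm (fun i => p i - c) = Dm p.
Proof.
apply/matrixP => i j; rewrite !mxE; apply: eq_bigr => t _; rewrite !mxE; congr (_ ^+ 2); ring.
Qed.

Lemma edist_sq (R : realType) d (x y : 'rV[R]_d) :
  edist x y ^+ 2 = \sum_t (x ord0 t - y ord0 t)^+2.
Proof. rewrite /edist sqr_sqrtr //; apply: sumr_ge0 => t _; exact: sqr_ge0. Qed.

Lemma edist_eq0 (R : realType) d (x y : 'rV[R]_d) : edist x y = 0 -> x = y.
Proof.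
move=> h; have : \sum_t (x ord0 t - y ord0 t)^+2 = 0 by rewrite -edist_sq h expr0n.
move/eqP; rewrite psumr_eq0 => [/allP H|t _]; last exact: sqr_ge0.
apply/matrixP => i t; rewrite (ord1 i).
have := H t (mem_index_enum _); rewrite sqrf_eq0 subr_eq0 => /eqP //.
Qed.

Lemma rep_facts (R : realType) n d (G : rel 'I_n) k (p : 'I_n -> 'rV[R]_d) :
  two_distance_rep G k p -> exists a2 : R, 0 < a2 /\ Dm p = - (a2^+2) *: BG G k.
Proof.
move=> [inj [a1 [a2 [lt12 hx kE hG]]]].
have a2pos : 0 < a2.
  have [i [j [nij e]]] : exists i j, i != j /\ a2 = edist (p i) (p j).
    by apply/hx; right.
  rewrite lt_neqAle e sqrtr_ge0 andbT; apply/eqP => /esym /edist_eq0 /inj /eqP.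
  by rewrite (negbTE nij).
exists a2; split => //.
apply/matrixP => i j; rewrite !mxE.
case: eqP => [->|/eqP nij].
  by rewrite mulr0; apply: big1 => t _; rewrite subrr expr0n.
rewrite -edist_sq.
have : edist (p i) (p j) = a1 \/ edist (p i) (p j) = a2 by apply/hx; exists i, j.
have a2n0 : a2 != 0 by rewrite gt_eqF.
case hij: (G i j).
  move=> _; rewrite (proj1 (hG i j nij) hij) kE expr_div_n mulrN mulNr opprK.
  by rewrite mulrC divfK // sqrf_eq0.
case => [e|->]; last by rewrite mulrN1 opprK.
by have := proj2 (hG i j nij) e; rewrite hij.
Qed.

Lemma J_eq (R : realType) n : Jmx R n = onev R n *m (onev R n)^T.
Proof. by apply/matrixP => i j; rewrite !mxE big_ord1 !mxE mulr1. Qed.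

Lemma trz (R : realType) m n p (A : 'M[R]_(m,n)) (v : 'M[R]_(m,p)) :
  A^T *m v = 0 -> v^T *m A = 0.
Proof. by move=> h; rewrite -[A]trmxK -trmx_mul h trmx0. Qed.

Lemma ker_q (R : realType) n d (G : rel 'I_n.+1) k (p : 'I_n.+1 -> 'rV[R]_d) r :
  two_distance_rep G k p -> psd (r *: Jmx R n.+1 + BG G k) ->
  forall v : 'cV[R]_n.+1, (Pm p)^T *m v = 0 -> (onev R n.+1)^T *m v = 0 -> (qv p)^T *m v = 0.
Proof.
move=> /rep_facts [a2 [a2pos hD]] hpsd v hP h1.
have hP' := trz hP; have h1' := trz h1.
have hB : BG G k = - (a2 ^+ 2)^-1 *: Dm p.
  by rewrite hD scalerA mulrNN mulVf ?scale1r // sqrf_eq0 gt_eqF.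
have hDv : v^T *m Dm p *m v = 0.
  rewrite Dm_eq mulmxBr mulmxDr mulmxBl mulmxDl -!scalemxAr -!scalemxAl.
  by rewrite !mulmxA h1' -!mulmxA h1 hP !mulmx0 !mul0mx scaler0 !addr0 subrr.
have hMv : v^T *m (r *: Jmx R n.+1 + BG G k) *m v = 0.
  rewrite mulmxDr mulmxDl hB -!scalemxAr -!scalemxAl hDv J_eq !mulmxA h1' !mul0mx.
  by rewrite !scaler0 addr0.
have := psd_ker hpsd (v:=v); rewrite hMv mxE => /(_ erefl).
rewrite mulmxDl J_eq -scalemxAl -mulmxA h1 mulmx0 scaler0 add0r hB -scalemxAl.
move/eqP; rewrite scaler_eq0 oppr_eq0 invr_eq0 sqrf_eq0 gt_eqF //= => /eqP.
rewrite Dm_eq mulmxBl mulmxDl -scalemxAl -!mulmxA h1 hP !mulmx0 scaler0 add0r subr0.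
move=> e; apply/matrixP => i j; rewrite (ord1 i) (ord1 j).
have := congr1 (fun M : 'M[R]_(n.+1,1) => M ord0 ord0) e; rewrite !mxE big_ord1 !mxE mul1r //.
Qed.

Lemma colM (R : realType) m n p j (A : 'M[R]_(m,n)) (B : 'M[R]_(n,p)) :
  col j (A *m B) = A *m col j B.
Proof. by apply/matrixP => a b; rewrite !mxE; apply: eq_bigr => s _; rewrite !mxE. Qed.

Lemma solve_sys (R : realType) n d (p : 'I_n -> 'rV[R]_d) :
  (forall v : 'cV[R]_n, (Pm p)^T *m v = 0 -> (onev R n)^T *m v = 0 -> (qv p)^T *m v = 0) ->
  exists (w : 'rV[R]_d) (t : R), forall i,
    \sum_s (p i ord0 s)^+2 = \sum_s w ord0 s * p i ord0 s + t.
Proof.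
move=> hyp.
set A := row_mx (Pm p) (onev R n).
have sub : ((qv p)^T <= A^T)%MS.
  rewrite submxE; apply/eqP/matrixP => i j.
  have hK := mulmx_coker A^T.
  have e : A^T *m col j (cokermx A^T) = 0 by rewrite -colM hK; apply/matrixP => a b; rewrite !mxE.
  move: e; rewrite tr_row_mx mul_col_mx => /eqP; rewrite col_mx_eq0 => /andP [/eqP e1 /eqP e2].
  have := hyp _ e1 e2.
  move/(congr1 (fun M : 'M[R]_(1,1) => M i ord0)); rewrite -colM !mxE //.
have [x hx] := submxP sub.
exists (lsubmx x), (rsubmx x ord0 ord0) => i.
move: hx; rewrite -(hsubmxK x) tr_row_mx mul_row_col row_mxKl row_mxKr.
move/(congr1 (fun M : 'M[R]_(1,n) => M ord0 i)); rewrite !mxE => ->.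
rewrite big_ord1 !mxE mulr1; congr (_ + _); apply: eq_bigr => s _; rewrite !mxE //.
Qed.

Lemma conv (R : realType) d (G : rel 'I_d.+2) k (p : 'I_d.+2 -> 'rV[R]_d) r :
  two_distance_rep G k p -> psd (r *: Jmx R d.+2 + BG G k) ->
  exists (c : 'rV[R]_d) (rho : R), 0 < rho /\ forall i, edist (p i) c = rho.
Proof.
move=> hrep hpsd.
have [w [t hw]] := solve_sys (ker_q hrep hpsd).
set c : 'rV[R]_d := 2^-1 *: w.
have hc : forall i, edist (p i) c = Num.sqrt (t + \sum_s (c ord0 s)^+2).
  move=> i; rewrite /edist; congr Num.sqrt.
  have -> : \sum_s (p i ord0 s - c ord0 s) ^+ 2 =
     \sum_s (p i ord0 s)^+2 - \sum_s w ord0 s * p i ord0 s + \sum_s (c ord0 s)^+2.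
    rewrite -sumrB -big_split /=; apply: eq_bigr => s _; rewrite /c !mxE.
    have h2 : (2 : R) * 2^-1 = 1 by rewrite mulfV // pnatr_eq0.
    set a := w ord0 s; set z := (2 : R)^-1.
    set x := p i ord0 s.
    have -> : (x - z * a) ^+ 2 = x ^+ 2 - (2 * z) * (a * x) + (z * a) ^+ 2 by ring.
    by rewrite h2 mul1r.
  rewrite hw; ring.
exists c, (Num.sqrt (t + \sum_s (c ord0 s)^+2)); split => //.
rewrite lt_neqAle sqrtr_ge0 andbT; apply/eqP => h0.
have e0 := hc ord0; have e1 := hc (lift ord0 ord0).
rewrite -h0 in e0 e1.
have h01 : p ord0 = p (lift ord0 ord0) by rewrite (edist_eq0 e0) (edist_eq0 e1).
by case: hrep => inj _; move: (inj _ _ h01).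
Qed.

Lemma psd_gram (R : realType) n m (U : 'M[R]_(n,m)) : psd (U *m U^T).
Proof.
split; first by rewrite trmx_mul trmxK.
move=> v; rewrite mulmxA -mulmxA -[v^T *m U]trmxK trmx_mul trmxK; exact: sqcol_ge0.
Qed.

Lemma psd_comb (R : realType) n (A B : 'M[R]_n) a b :
  0 <= a -> 0 <= b -> psd A -> psd B -> psd (a *: A + b *: B).
Proof.
move=> ha hb [sA pA] [sB pB]; split; first by rewrite trD !trZ sA sB.
move=> v; rewrite mulmxDr mulmxDl -!scalemxAr -!scalemxAl.
move: (pA v) (pB v); move: (v^T *m A *m v) (v^T *m B *m v) => x y hx hy.
by rewrite !mxE; apply: addr_ge0; apply: mulr_ge0.
Qed.

Lemma fwd_psd (R : realType) n d (G : rel 'I_n) k (p : 'I_n -> 'rV[R]_d) c rho :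
  two_distance_rep G k p -> (forall i, edist (p i) c = rho) ->
  exists r0 : R, forall r : R, r0 <= r -> psd (r *: Jmx R n + BG G k).
Proof.
move=> /rep_facts [a2 [a2pos hD]] hc.
set beta := (a2 ^+ 2)^-1.
have hB : BG G k = - beta *: Dm p.
  by rewrite hD scalerA mulrNN mulVf ?scale1r // sqrf_eq0 gt_eqF.
set u := fun i => p i - c.
have hq : qv u = rho ^+ 2 *: onev R n.
  apply/matrixP => i j; rewrite !mxE -(hc i) edist_sq mulr1.
  by apply: eq_bigr => s _; rewrite !mxE.
have bpos : 0 <= beta by rewrite invr_ge0 sqr_ge0.
exists (beta * (2 * rho ^+ 2)) => r hr.
have -> : r *: Jmx R n + BG G k =
   (r - beta * (2 * rho ^+ 2)) *: (onev R n *m (onev R n)^T) + (beta * 2) *: (Pm u *m (Pm u)^T).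
  rewrite hB -(Dm_shift p c) -/u Dm_eq hq J_eq.
  apply/matrixP => i j; rewrite !mxE !big_ord1 !mxE.
  ring.
apply: psd_comb; [by rewrite subr_ge0 | by rewrite mulr_ge0 | exact: psd_gram | exact: psd_gram].
Qed.

Lemma ker_vec (R : realType) n m (A : 'M[R]_(n, m)) : (m < n)%N ->
  exists2 v : 'rV[R]_n, v != 0 & v *m A = 0.
Proof.
move=> hmn; have : kermx A != 0.
  rewrite -mxrank_eq0 mxrank_ker; have := rank_leq_col A.
  by rewrite subn_eq0 -ltnNge => /leq_ltn_trans; apply.
case: (pickP (fun i => row i (kermx A) != 0)) => [i hi|h].
  by move=> _; exists (row i (kermx A)) => //; rewrite -row_mul mulmx_ker row0.
move/eqP; case; apply/row_matrixP => i; rewrite row0; apply/eqP.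
by have := h i => /negbFE.
Qed.

Lemma fwd_det (R : realType) d (G : rel 'I_d.+2) k (p : 'I_d.+2 -> 'rV[R]_d) c rho :
  two_distance_rep G k p -> (forall i, edist (p i) c = rho) ->
  \det (const_mx 'X + map_mx polyC (BG G k)) = 0 :> {poly R}.
Proof.
move=> /rep_facts [a2 [a2pos hD]] hc.
set beta := (a2 ^+ 2)^-1.
have hB : BG G k = - beta *: Dm p.
  by rewrite hD scalerA mulrNN mulVf ?scale1r // sqrf_eq0 gt_eqF.
set u := fun i => p i - c.
have hq : qv u = rho ^+ 2 *: onev R d.+2.
  apply/matrixP => i j; rewrite !mxE -(hc i) edist_sq mulr1.
  by apply: eq_bigr => s _; rewrite !mxE.
have [v vn0 hv] := @ker_vec _ _ _ (row_mx (Pm u) (onev R d.+2)) (ltac:(by rewrite addn1)).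
move: hv; rewrite mul_mx_row => /eqP; rewrite row_mx_eq0 => /andP [/eqP hvP /eqP hv1].
have hvB : v *m BG G k = 0.
  rewrite hB -(Dm_shift p c) -/u Dm_eq hq -!scalemxAr mulmxBr mulmxDr.
  rewrite -!scalemxAr -!scalemxAl !mulmxA hv1 hvP -scalemxAr mulmxA hv1 !mul0mx !scaler0 addr0 subr0 scaler0 //.

set M := const_mx 'X + map_mx polyC (BG G k).
set vp := map_mx polyC v.
have hvM : vp *m M = 0.
  rewrite /M mulmxDr /vp -map_mxM hvB map_mx0 addr0.
  apply/matrixP => i j; rewrite !mxE.
  rewrite (eq_bigr (fun j0 => vp i j0 * 'X)); last by move=> s _; rewrite [const_mx _ _ _]mxE.
  rewrite -mulr_suml.
  have -> : \sum_j0 vp i j0 = (\sum_j0 v i j0)%:P.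
    by rewrite rmorph_sum; apply: eq_bigr => s _; rewrite !mxE.
  have : (v *m onev R d.+2) i ord0 = 0 by rewrite hv1 mxE.
  rewrite mxE => e.
  have -> : \sum_j0 v i j0 = 0.
    by rewrite -[RHS]e; apply: eq_bigr => s _; rewrite mxE mulr1.
  by rewrite polyC0 mul0r.
have : vp *m (M *m \adj M) = 0 by rewrite mulmxA hvM mul0mx.
rewrite mul_mx_adj mul_mx_scalar.
have [j hj] : exists j, v ord0 j != 0.
  apply/existsP; apply: contraR vn0 => /existsPn h; apply/eqP/matrixP => i j.
  by rewrite (ord1 i) mxE; apply/eqP; have := h j; rewrite negbK.
move/(congr1 (fun N : 'M[{poly R}]_(1, d.+2) => N ord0 j)); rewrite !mxE.
by move/eqP; rewrite mulf_eq0 polyC_eq0 (negbTE hj) orbF => /eqP.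
Qed.

Theorem lemma3p4 (R : realType) (d : nat) (G : rel 'I_(d.+2)) (k : R) :
  simple_graph G ->
  representable G k ->
  (spherical_representable G k <->
     (\det (const_mx 'X + map_mx polyC (BG G k)) = 0 :> {poly R} /\
      exists r0 : R, forall r : R, r0 <= r -> psd (r *: Jmx R (d.+2) + BG G k))).
Proof.
move=> _ [p hp]; split.
  move=> [q [hq [c [rho [_ hc]]]]]; split; first exact: fwd_det hq hc.
  exact: fwd_psd hq hc.
move=> [_ [r0 hr]].
have [c [rho [h1 h2]]] := conv hp (hr r0 (lexx r0)).
by exists p; split => //; exists c, rho.
Qed.
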